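(* Let $s,t,z$ be positive integers, $p=\min\{\lfloor\frac{z-1}{ts-t}\rfloor,t-1\}$ (with $p=t-1$ when $s=1$), and let $N_{\text{PolyDot-CMPC}}$ and $N_{\text{GCSA-NA}}$ be as in the context. Then $N_{\text{PolyDot-CMPC}}<N_{\text{GCSA-NA}}$ in the regions 1. $z>ts$, $p<\frac{t-1}{s}$, $t\ne1$; 2. $s<t$, $ts-t<z\le\min\{ts,\,t(t-1)-1\}$; 3. $z\le ts-t$; 4. $s=1$, $t>z$, $t\ne2$; and for all other values of $s,t,z$, $N_{\text{PolyDot-CMPC}}\ge N_{\text{GCSA-NA}}$.
   Context: $N_{\text{PolyDot-CMPC}}$ is the number of workers needed by the PolyDot-CMPC scheme, given by: with $\theta'=2ts-t$ and $\upsilon'=\max\{ts-2t-s+2,\frac{ts-2t+1}{2}\}$, $N_{\text{PolyDot-CMPC}}=(p+2)ts+\theta'(t-1)+2z-1$ if $ts<z$ or $t=1$; $=2ts+\theta'(t-1)+3z-1$ if $ts-t<z\le ts$, $s,t\ne1$; $=2ts+\theta'(t-1)+2z-1$ if $ts-2t<z\le ts-t$, $s,t\ne1$; $=(t+1)ts+(t-1)(z+t-1)+2z-1$ if $\upsilon'<z\le ts-2t$, $s,t\ne1$; $=\theta't+z$ if $z\le\upsilon'$, $s,t\ne1$; $=t^2+2t+tz-1$ if $s=1$, $t\ge z$, $t\ne1$. $N_{\text{GCSA-NA}}=2st^2+2z-1$ is the number of workers of the GCSA-NA baseline with a single batch. Here $s,t$ are the numbers of row/column partitions and $z$ the number of colluding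 workers.
   Formalization: Regions 2 and 3 also require s ≠ 1 and t ≠ 1, so their points with s = 1 or t = 1 fall under the clause $N_{\text{PolyDot-CMPC}}\ge N_{\text{GCSA-NA}}$. Apart from conventions, each condition added here is assumed in the paper as well or is needed for the statement above to hold. *)

(* Defs.v *)
From HB Require Import structures.
From mathcomp Require Import all_boot all_order all_algebra.
Set Implicit Arguments. Unset Strict Implicit. Unset Printing Implicit Defensive.
Import Order.TTheory GRing.Theory Num.Theory.
Local Open Scope ring_scope.

Definition thetap (s t : nat) : rat := 2 * t%:R * s%:R - t%:R.

Definition upsilonp (s t : nat) : rat :=
  Num.max (t%:R * s%:R - 2 * t%:R - s%:R + 2)
          ((t%:R * s%:R - 2 * t%:R + 1) / 2).

Definition p_param (s t z : nat) : int :=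
  if s == 1%N then t%:Z - 1
  else Num.min (Num.floor ((z%:R - 1) / (t%:R * s%:R - t%:R) : rat)) (t%:Z - 1).

Definition N_PolyDot (s t z : nat) : rat :=
  let ts : rat := t%:R * s%:R in
  let T : rat := t%:R in
  let S : rat := s%:R in
  let Z : rat := z%:R in
  let th := thetap s t in
  let up := upsilonp s t in
  let p : rat := (p_param s t z)%:~R in
  if (ts < Z) || (t == 1%N) then (p + 2) * ts + th * (T - 1) + 2 * Z - 1
  else if (s != 1%N) && (t != 1%N) then
    if (ts - T < Z) && (Z <= ts) then 2 * ts + th * (T - 1) + 3 * Z - 1
    else if (ts - 2 * T < Z) && (Z <= ts - T) then 2 * ts + th * (T - 1) + 2 * Z - 1
    else if (up < Z) && (Z <= ts - 2 * T) then
      (T + 1) * ts + (T - 1) * (Z + T - 1) + 2 * Z - 1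
    else (* Z <= up *) th * T + Z
  else (* s = 1, t >= z, t <> 1 *) T ^+ 2 + 2 * T + T * Z - 1.

Definition N_GCSA_NA (s t z : nat) : rat :=
  2 * s%:R * t%:R ^+ 2 + 2 * z%:R - 1.

(* the regions where PolyDot-CMPC beats GCSA-NA.  Regions 2 and 3 are read
   as sub-regions of the "s,t <> 1" cases of N_PolyDot. *)
Definition better_region (s t z : nat) : Prop :=
  let ts : rat := t%:R * s%:R in
  let T : rat := t%:R in
  let Z : rat := z%:R in
  [/\ ts < Z, (p_param s t z)%:~R < (T - 1) / s%:R & t <> 1%N]
  \/ [/\ s <> 1%N, t <> 1%N, (s < t)%N, ts - T < Z & Z <= Num.min ts (T * (T - 1) - 1)]
  \/ [/\ s <> 1%N, t <> 1%N & Z <= ts - T]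
  \/ [/\ s = 1%N, (z < t)%N & t <> 2%N].

(* Main.v *)
Require Import Defs.
From mathcomp Require Import all_boot all_order all_algebra.
From mathcomp Require Import lra ring.
Import Order.TTheory GRing.Theory Num.Theory.
Local Open Scope ring_scope.

Lemma p1 (s z : nat) : (0 < s)%N -> (0 < z)%N -> (0 <= p_param s 1 z)%R.
Proof.
move=> s0 z0; rewrite /p_param; case: ifP => _ //.
rewrite mul1r subrr le_min lexx andbT floor_ge0 divr_ge0 // subr_ge0 ler1n //.
Qed.

Lemma intgap (a b : nat) : (a%:R : rat) < b%:R + 1 -> (a%:R : rat) <= b%:R.
Proof. by rewrite -[1]/(1%:R) -natrD ltr_nat ler_nat addn1 ltnS. Qed.

Theorem lemma3 (s t z : nat) :
  (0 < s)%N -> (0 < t)%N -> (0 < z)%N ->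
  (better_region s t z -> N_PolyDot s t z < N_GCSA_NA s t z) /\
  (~ better_region s t z -> N_GCSA_NA s t z <= N_PolyDot s t z).
Proof.
move=> s0 t0 z0.
rewrite /N_PolyDot /N_GCSA_NA /better_region /thetap /=.
have Pt1 : t = 1%N -> 0 <= ((p_param s t z)%:~R : rat).
  by move=> Et; rewrite Et ler0z p1.
move: Pt1; set P := ((p_param s t z)%:~R : rat) => Pt1.
have S1 : 1 <= s%:R :> rat by rewrite ler1n.
have T1 : 1 <= t%:R :> rat by rewrite ler1n.
have Z1 : 1 <= z%:R :> rat by rewrite ler1n.
have Ps : P < (t%:R - 1) / s%:R <-> P * s%:R < t%:R - 1.
  by rewrite ltr_pdivlMr // ?(lt_le_trans ltr01 S1).
have gtt : t%:R * (t%:R - 1) - 1 < (z%:R : rat) -> t%:R * (t%:R - 1) <= z%:R :> rat.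
  have tt1 : t%:R * (t%:R - 1) = ((t * (t-1))%N%:R : rat) by rewrite natrM natrB.
  by rewrite ltrBlDr tt1; apply: intgap.
have gts : t%:R * s%:R < (z%:R:rat) -> t%:R * s%:R + 1 <= z%:R :> rat.
  by rewrite -natrM -[1]/(1%:R) -natrD ltr_nat ler_nat addn1.
have ST : (s < t)%N -> s%:R < t%:R :> rat by rewrite ltr_nat.
have ST' : ~~ (s < t)%N -> t%:R <= s%:R :> rat by rewrite -leqNgt ler_nat.
have zt : (z < t)%N -> z%:R < t%:R :> rat by rewrite ltr_nat.
have zt' : ~~ (z < t)%N -> t%:R <= z%:R :> rat by rewrite -leqNgt ler_nat.
have s1 : (s == 1)%N -> s%:R = 1 :> rat by move/eqP->.
have t1 : (t == 1)%N -> t%:R = 1 :> rat by move/eqP->.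
have s1' : (s != 1)%N -> 2 <= s%:R :> rat by rewrite ler_nat; move: s0; case: (s) => [|[|]].
have t1' : (t != 1)%N -> 2 <= t%:R :> rat by rewrite ler_nat; move: t0; case: (t) => [|[|]].
rewrite le_min.
move: P Pt1 Ps => P Pt1 Ps.
case: ifP => hA.
  have [/eqP ht|tn1] := boolP (t == 1%N).
    subst t.
    have P0 := Pt1 erefl.
    split.
      case=> [[_ _ //]|[[_ //]|[[_ //]|[_ h _]]]].
      by move: z0; rewrite ltnNge -ltnS h.
    move=> _. nra.
  move: hA; rewrite (negbTE tn1) orbF => hA.
  have H2 := t1' tn1.
  have HS := gts hA.
  split.
    case=> [[_ /Ps h _]|[[_ _ _ _ /andP[h _]]|[[_ _ h]|[/eqP es h _]]]].
    - nra.
    - lra.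
    - nra.
    - move: HS; rewrite (s1 es) mulr1 => HS; have := zt h; lra.
  move=> nR; have nP : ~ (P * s%:R < t%:R - 1).
    by move=> /Ps h; apply: nR; left; split => //; apply/eqP.
  move/negP: nP; rewrite -leNgt => nP. nra.
have tn1 : t != 1%N by apply/negP => /eqP Et; move: hA; rewrite Et orbT.
move: hA; rewrite (negbTE tn1) orbF => /negbT; rewrite -leNgt => hZ.
have H2 := t1' tn1.
have tn1' : t <> 1%N by apply/eqP.
case: ifP => hB.
  move: hB; rewrite andbT => sn1.
  have S2 := s1' sn1.
  have sn1' : s <> 1%N by apply/eqP.
  case: ifP => hB1.
    move/andP: hB1 => [h1 h2].
    split.
      case=> [[h _ _]|[[_ _ _ _ /andP[_ h]]|[[_ _ h]|[h _ _]]]].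
      - lra.
      - lra.
      - lra.
      - by case: sn1'.
    move=> nR.
    have [st|st] := boolP (s < t)%N.
      have [hz|hz] := boolP ((z%:R : rat) <= t%:R * (t%:R - 1) - 1).
        by case: nR; right; left; split => //; rewrite h2.
      move: hz; rewrite -ltNge => /gtt hz. lra.
    have := ST' st => TS. nra.
  have hZ3 : (z%:R : rat) <= t%:R * s%:R - t%:R.
    by move: hB1; rewrite hZ andbT => /negbT; rewrite -leNgt.
  split; last by move=> nR; case: nR; right; right; left.
  move=> _.
  case: ifP => [/andP[h1 h2]|_]; first nra.
  case: ifP => [/andP[h1 h2]|_]; nra.
move: hB; rewrite andbT => /negbFE es.
have S1e := s1 es.
have es' := eqP es.
rewrite S1e mulr1 in hZ *.
have [zt1|zt1] := boolP (z < t)%N.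
  have [t2|t2] := boolP (t == 2%N).
    move/eqP: t2 => t2; subst t; split.
      case=> [[h _ _]|[[//]|[[//]|[_ _ //]]]]; lra.
    move=> _. rewrite -[2%:R]/(2 : rat). lra.
  have T3 : 3 <= (t%:R : rat).
    by rewrite ler_nat; move: t0 tn1 t2; case: (t) => [|[|[|]]].
  have := zt zt1 => hz.
  split; first by move=> _; nra.
  by move=> nR; case: nR; right; right; right; split => //; apply/eqP.
have := zt' zt1 => hz.
split; last by move=> _; nra.
case=> [[h _ _]|[[//]|[[//]|[_ h _]]]]; first lra.
by [].
Qed.
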